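(* Let $G$ be a graph and $\phi\colon E(G)\to\{\mathrm{red},\mathrm{blue}\}$ a $2$-edge coloring. Let $C$ be an alternating cycle in $\phi$, and let $\phi'$ be obtained from $\phi$ by inverting $C$. Then for each $\gamma\in\{\mathrm{red},\mathrm{blue}\}$, the set of conflicting edges of $G_{\gamma,\phi'}$ is a subset of the set of conflicting edges of $G_{\gamma,\phi}$.
   Context: All graphs are finite and simple. For a coloring $\phi$ and color $\gamma$, $G_{\gamma,\phi}=(V(G),\phi^{-1}(\gamma))$ is the spanning subgraph of edges of color $\gamma$. An edge $uv$ of a graph $H$ is conflicting in $H$ if $d_H(u)=d_H(v)$. An even cycle $C=(u_1,\ldots,u_k,u_{k+1}=u_1)$ of $G$ is an alternating cycle in $\phi$ if $\phi(u_iu_{i+1})\ne\phi(u_{i+1}u_{i+2})$ for all $1\le i<k$, and for every $1\le i\le k$, letting $\bar\gamma$ be the color different from $\phi(u_iu_{i+1})$, one has $d_{G_{\bar\gamma,\phi}}(u_i)\ne d_{G_{\bar\gamma,\phi}}(u_{i+1})$. The coloring obtained from $\phi$ by inverting $C$ is the coloring $\phi'$ with $\phi'(e)$ equal to the color other than $\phi(e)$ for $e\in E(C)$ and $\phi'(e)=\phi(e)$ otherwise. *)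

(* Defs.v *)
From mathcomp Require Import all_boot.
Set Implicit Arguments. Unset Strict Implicit. Unset Printing Implicit Defensive.

(* A finite simple graph: vertex type T : finType, adjacency e : rel T,
   symmetric and irreflexive.  An edge {x,y} is represented by the
   (symmetric) pair relation e x y. *)
Definition simple_graph (T : finType) (e : rel T) : Prop :=
  symmetric e /\ irreflexive e.

Definition color := bool.
Definition red : color := true.
Definition blue : color := false.
Definition other (g : color) : color := ~~ g.

(* A 2-edge coloring phi : E(G) -> {red, blue}, encoded as a function on
   vertex pairs that is symmetric on edges (values on non-edges are
   irrelevant). *)
Definition edge_coloring (T : finType) (e : rel T) (phi : T -> T -> color) :=
  forall x y, e x y -> phi x y = phi y x.

Definition cdeg (T : finType) (e : rel T) (phi : T -> T -> color)
    (gamma : color) (u : T) : nat :=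
  #|[set v | e u v & phi u v == gamma]|.

(* the (ordered pairs of endpoints of) conflicting edges of G_{gamma,phi} *)
Definition conflicting_edges (T : finType) (e : rel T)
    (phi : T -> T -> color) (gamma : color) : {set T * T} :=
  [set p | [&& e p.1 p.2, phi p.1 p.2 == gamma &
              cdeg e phi gamma p.1 == cdeg e phi gamma p.2]].

(* A cycle C = (u_1,...,u_k, u_{k+1} = u_1) is given by the sequence
   s = [:: u_1; ...; u_k] (0-indexed below), vertex i being cv s i and
   vertex i+1 taken cyclically. *)
Section Cyc.
Variable T : finType.
Variable x0 : T.
Definition cv (s : seq T) (i : nat) : T := nth x0 s (i %% size s).
End Cyc.

Definition is_cycle (T : finType) (e : rel T) (s : seq T) : Prop :=
  2 < size s /\ uniq s /\ cycle e s.

Definition alternating_cycle (T : finType) (e : rel T)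
    (phi : T -> T -> color) (s : seq T) : Prop :=
  is_cycle e s /\ ~~ odd (size s) /\
  (forall x0 : T, forall i, i.+1 < size s ->
      phi (cv x0 s i) (cv x0 s i.+1) != phi (cv x0 s i.+1) (cv x0 s i.+2)) /\
  (forall x0 : T, forall i, i < size s ->
      let gb := other (phi (cv x0 s i) (cv x0 s i.+1)) in
      cdeg e phi gb (cv x0 s i) != cdeg e phi gb (cv x0 s i.+1)).

Definition on_cycle (T : finType) (s : seq T) (x y : T) : bool :=
  has (fun i => ((x == cv x s i) && (y == cv x s i.+1)) ||
                ((y == cv x s i) && (x == cv x s i.+1)))
      (iota 0 (size s)) && (x \in s).

Definition invert_cycle (T : finType) (phi : T -> T -> color) (s : seq T)
    : T -> T -> color :=
  fun x y => if on_cycle s x y then other (phi x y) else phi x y.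

(* Main.v *)
Require Import Defs.
From mathcomp Require Import all_boot.
From mathcomp Require Import zify.
Set Implicit Arguments. Unset Strict Implicit. Unset Printing Implicit Defensive.

Lemma nth_next_aux (T : eqType) (a y : T) (p : seq T) k : k < (size p).+1 ->
  nth y p k = nth a (y :: p) (k.+1 %% (size (y :: p))).
Proof.
move=> hk /=; rewrite ltnS leq_eqVlt in hk; case/orP: hk => [/eqP ->|hk].
  by rewrite modnn /= nth_default.
by rewrite modn_small ?ltnS //= (set_nth_default y).
Qed.

Definition swap (T : eqType) (a b w : T) :=
  if w == a then b else if w == b then a else w.

Lemma swapK (T : eqType) (a b : T) : involutive (swap a b).
Proof.
move=> w; rewrite /swap.
case: (eqVneq w a) => [->|wa]; rewrite ?eqxx.
  by case: (eqVneq b a) => [->|ba]; rewrite ?eqxx // (negbTE ba) eqxx.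
case: (eqVneq w b) => [->|wb]; first by rewrite eqxx.
by rewrite (negbTE wa) (negbTE wb).
Qed.

Section Aux.
Variable T : finType.
Variable s : seq T.
Hypothesis Hn : 0 < size s.
Local Notation n := (size s).

Lemma cvE (a b : T) i : cv a s i = cv b s i.
Proof. by rewrite /cv (set_nth_default b) // ltn_pmod. Qed.

Lemma cv_mod a i : cv a s (i %% n) = cv a s i.
Proof. by rewrite /cv modn_mod. Qed.

Lemma cv_modS a i : cv a s (i %% n).+1 = cv a s i.+1.
Proof. by rewrite /cv -[(_ %% _).+1]addn1 -[i.+1]addn1 modnDml. Qed.

Lemma cv_addn a i : cv a s (i + n) = cv a s i.
Proof. by rewrite /cv modnDr. Qed.

Lemma cv_pred a j : cv a s (j + n - 1).+1 = cv a s j.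
Proof. by rewrite (_ : (j + n - 1).+1 = j + n) ?cv_addn //; lia. Qed.

Lemma cv_index a x : x \in s -> cv a s (index x s) = x.
Proof. by move=> xs; rewrite /cv modn_small ?index_mem // nth_index. Qed.

Lemma cv_eq a i j : uniq s -> (cv a s i == cv a s j) = (i == j %[mod n]).
Proof. by move=> u; rewrite /cv nth_uniq // ltn_pmod. Qed.

Lemma cv_in a i : cv a s i \in s.
Proof. by rewrite /cv mem_nth // ltn_pmod. Qed.

Lemma index_cv a i : uniq s -> index (cv a s i) s = i %% n.
Proof. by move=> u; rewrite /cv index_uniq // ltn_pmod. Qed.

Lemma cv_next a i : uniq s -> next s (cv a s i) = cv a s i.+1.
Proof.
move=> u; rewrite next_nth cv_in index_cv // -cv_modS.
move: (i %% n) (ltn_pmod i Hn) => k hk.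
rewrite /cv; case E: s hk => [|y p] //= hk.
by rewrite -E (nth_next_aux a) // E.
Qed.

Lemma on_cycleE x y : uniq s -> x \in s -> on_cycle s x y =
  (y == cv x s (index x s).+1) || (y == cv x s (index x s + n - 1)).
Proof.
move=> u xs; rewrite /on_cycle xs andbT.
set j := index x s.
have xj : x = cv x s j by rewrite cv_index.
apply/hasP/orP.
  case=> i; rewrite mem_iota add0n => /andP[_ hi].
  case/orP=> [/andP[/eqP xi /eqP yi]|/andP[/eqP yi /eqP xi]].
    left; rewrite yi.
    have : cv x s i == cv x s j by rewrite -xi -xj.
    by rewrite cv_eq // => /eqP ij; rewrite -cv_modS ij cv_modS.
  right; rewrite yi.
  have : cv x s i.+1 == cv x s j by rewrite -xi -xj.
  rewrite cv_eq // => ij.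
  rewrite cv_eq // -(eqn_modDr 1) !addn1.
  by rewrite (_ : (j + n - 1).+1 = j + n) ?modnDr //; lia.
case=> /eqP yE.
  exists (j %% n); first by rewrite mem_iota add0n ltn_pmod.
  by rewrite cv_mod -xj eqxx cv_modS yE eqxx.
exists ((j + n - 1) %% n); first by rewrite mem_iota add0n ltn_pmod.
by rewrite cv_mod cv_modS cv_pred -xj yE !eqxx orbT.
Qed.

Lemma on_cycle_notin x y : x \notin s -> on_cycle s x y = false.
Proof. by move=> xs; rewrite /on_cycle (negbTE xs) andbF. Qed.

End Aux.

Section Main.
Variable T : finType.
Variable e : rel T.
Variable phi : T -> T -> color.
Variable s : seq T.
Hypothesis Hsym : symmetric e.
Hypothesis Hcol : edge_coloring e phi.
Hypothesis Hsz : 2 < size s.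
Hypothesis Hu : uniq s.
Hypothesis Hcyc : path.cycle e s.
Hypothesis Hev : ~~ odd (size s).
Hypothesis Halt : forall x0 : T, forall i, i.+1 < size s ->
      phi (cv x0 s i) (cv x0 s i.+1) != phi (cv x0 s i.+1) (cv x0 s i.+2).
Local Notation n := (size s).

Lemma Hn : 0 < n. Proof. exact: ltnW (ltnW Hsz). Qed.

Lemma edge_cv x0 i : e (cv x0 s i) (cv x0 s i.+1).
Proof. by rewrite -cv_next ?Hn //; apply: next_cycle => //; apply: cv_in; apply: Hn. Qed.

Definition col x0 i := phi (cv x0 s i) (cv x0 s i.+1).

Lemma col_mod x0 i : col x0 (i %% n) = col x0 i.
Proof. by rewrite /col cv_mod ?cv_modS // Hn. Qed.

Lemma col_alt0 x0 i : i < n -> col x0 i = col x0 0 (+) odd i.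
Proof.
elim: i => [|i IH] hi; first by rewrite addbF.
have h : col x0 i != col x0 i.+1 := Halt x0 hi.
rewrite IH ?(ltnW hi) // in h; move: h => /=.
by case: (col x0 i.+1); case: (col x0 0); case: (odd i).
Qed.

Lemma col_alt x0 i : col x0 i != col x0 i.+1.
Proof.
rewrite -col_mod -(col_mod x0 i.+1).
rewrite (col_alt0 x0 (ltn_pmod i Hn)) (col_alt0 x0 (ltn_pmod i.+1 Hn)).
have ev : odd n = false by apply/negbTE.
rewrite !odd_mod //=.
by case: (col x0 0); case: (odd i).
Qed.

Lemma vertex_alt x0 j :
  phi (cv x0 s j) (cv x0 s j.+1) != phi (cv x0 s j) (cv x0 s (j + n - 1)).
Proof.
have E := edge_cv x0 (j + n - 1); rewrite cv_pred ?Hn // in E.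
rewrite -(Hcol E).
have := col_alt x0 (j + n - 1); rewrite /col.
rewrite (_ : (j + n - 1).+1 = j + n); last by have := Hn; lia.
by rewrite -addSn !cv_addn ?Hn // eq_sym.
Qed.

Lemma cdeg_inv g v : cdeg e (invert_cycle phi s) g v = cdeg e phi g v.
Proof.
rewrite /cdeg.
case: (boolP (v \in s)) => vs; last first.
  by apply: eq_card => w; rewrite !inE /invert_cycle on_cycle_notin.
set j := index v s.
set a := cv v s j.+1.
set b := cv v s (j + n - 1).
have vj : v = cv v s j by rewrite cv_index // Hn.
have ab : a != b.
  rewrite /a /b cv_eq ?Hn //; apply/negP => /eqP h.
  have : (j.+1 + 2) %% n = (j.+1 + 0) %% n.
    rewrite addn0 -modnDml h modnDml.
    by rewrite (_ : j + n - 1 + 2 = j.+1 + n) ?modnDr //; have := Hn; lia.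
  by move/eqP; rewrite eqn_modDl mod0n modn_small.
have eva : e v a by rewrite {1}vj /a edge_cv.
have evb : e v b.
  by rewrite Hsym {1}vj /b -(cv_pred Hn v j) edge_cv.
have pab : ~~ phi v a = phi v b.
  by move: (vertex_alt v j); rewrite -vj -/a -/b; case: (phi v a); case: (phi v b).
have -> : [set w | e v w & invert_cycle phi s v w == g] =
          swap a b @^-1: [set w | e v w & phi v w == g].
  apply/setP => w; rewrite !inE /invert_cycle on_cycleE ?Hn // -/j -/a -/b /swap.
  case: (eqVneq w a) => [->|wa] /=; first by rewrite eva evb /other pab.
  case: (eqVneq w b) => [->|wb] /=; last by [].
  by rewrite eva evb /other -pab negbK.
by rewrite card_preimset //; apply: (can_inj (swapK a b)).
Qed.

End Main.

Theorem lemma2p6 (T : finType) (e : rel T) (phi : T -> T -> color)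
    (s : seq T) :
  simple_graph e -> edge_coloring e phi -> alternating_cycle e phi s ->
  forall gamma : color,
    conflicting_edges e (invert_cycle phi s) gamma \subset
    conflicting_edges e phi gamma.
Proof.
move=> [Hsym _] Hcol [[Hsz [Hu Hcyc]] [Hev [Halt Hdeg]]] g.
have Hn : 0 < size s by apply: ltnW (ltnW Hsz).
apply/subsetP => [[x y]]; rewrite !inE /= => /and3P[exy Hc Hd].
rewrite !(cdeg_inv Hsym Hcol Hsz Hu Hcyc Hev Halt) in Hd.
rewrite exy Hd andbT /=.
move: Hc; rewrite /invert_cycle.
case Eo: (on_cycle s x y) => // Hc; exfalso.
have Hc' : ~~ phi x y = g by apply/eqP.
have xs : x \in s by move: Eo; rewrite /on_cycle => /andP[_].
rewrite on_cycleE // in Eo.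
set j := index x s in Eo.
have xj : x = cv x s j by rewrite cv_index.
case/orP: Eo => /eqP yE.
  have := Hdeg x (j %% size s) (ltn_pmod _ Hn).
  rewrite /= cv_mod // cv_modS // -yE -xj /other Hc' (eqP Hd).
  by rewrite eqxx.
have := Hdeg x ((j + size s - 1) %% size s) (ltn_pmod _ Hn).
rewrite /= cv_mod // cv_modS // cv_pred // -yE -xj.
have eyx : e y x by rewrite Hsym.
rewrite (Hcol _ _ eyx) /other Hc' (eqP Hd).
by rewrite eqxx.
Qed.
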